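(* Let $\mathcal C$ be a convex curve whose radius of curvature satisfies $\rho\ge R_1$ at every point, for some constant $R_1>0$, and whose total curvature satisfies $\int_{\mathcal C}\kappa\,ds\le \pi$. Let $\mathcal L$ be a lattice in $\mathbb R^2$. If $$\frac{\mathrm{Length}(\mathcal C)}{(A_{\mathcal L} R_1)^{1/3}}\le 2,$$ then $\mathcal C$ contains at most two points of $\mathcal L$.
   Context: A lattice is a set $\mathcal L=\mathcal L(v_0,v_1,v_2)=\{v_0+mv_1+nv_2: m,n\in\mathbb Z\}$ where $v_0,v_1,v_2\in\mathbb R^2$ and $v_1,v_2$ are linearly independent (points need not have integer coordinates). Its invariant is $A_{\mathcal L}=|\det(v_1,v_2)|$, the absolute value of the determinant of the $2\times2$ matrix with columns $v_1,v_2$. All curves are of class $C^2$ with nonvanishing first and second derivative vectors, oriented so that the curvature $\kappa$ is positive; a convex curve is such a curve (lying on the boundary of a convex planar region). The radius of curvature is $\rho=1/\kappa$, $s$ is arclength, and the total curvature of $\mathcal C$ is $\int_{\mathcal C}\kappa\,ds$, the total change of the tangent angle along $\mathcal C$. *)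

(* Defs.v *)
From Stdlib Require Import Reals ZArith.
From Coquelicot Require Import Coquelicot.
Open Scope R_scope.

Definition pt := (R * R)%type.

Definition in_lattice (v0 v1 v2 : pt) (p : pt) : Prop :=
  exists m n : Z,
    fst p = fst v0 + IZR m * fst v1 + IZR n * fst v2 /\
    snd p = snd v0 + IZR m * snd v1 + IZR n * snd v2.

Definition det2 (v1 v2 : pt) : R := fst v1 * snd v2 - snd v1 * fst v2.

Definition lattice_invariant (v1 v2 : pt) : R := Rabs (det2 v1 v2).

(* A curve is given by coordinate functions x, y : R -> R, parameter t in [a,b]. *)
Definition speed (x y : R -> R) (t : R) : R :=
  sqrt (Derive x t ^ 2 + Derive y t ^ 2).

Definition curvature (x y : R -> R) (t : R) : R :=
  (Derive x t * Derive_n y 2 t - Derive y t * Derive_n x 2 t) / (speed x y t ^ 3).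

Definition curve_length (x y : R -> R) (a b : R) : R := RInt (speed x y) a b.

Definition total_curvature (x y : R -> R) (a b : R) : R :=
  RInt (fun t => curvature x y t * speed x y t) a b.

(* C^2 regularity of a real function (on all of R; any C^2 function on [a,b]
   extends to a C^2 function on R). *)
Definition C2 (f : R -> R) : Prop :=
  forall t, ex_derive f t /\ ex_derive (Derive f) t /\ continuous (Derive_n f 2) t.

Definition convex_set (K : pt -> Prop) : Prop :=
  forall p q : pt, K p -> K q -> forall l : R, 0 <= l <= 1 ->
    K ((1 - l) * fst p + l * fst q, (1 - l) * snd p + l * snd q).

Definition interior_pt (K : pt -> Prop) (p : pt) : Prop :=
  exists eps : R, 0 < eps /\ forall q : pt,
    (fst q - fst p) ^ 2 + (snd q - snd p) ^ 2 < eps ^ 2 -> K q.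

Definition on_convex_boundary (x y : R -> R) (a b : R) : Prop :=
  exists K : pt -> Prop, convex_set K /\
    (forall t, a <= t <= b -> K (x t, y t)) /\
    (forall t, a <= t <= b -> ~ interior_pt K (x t, y t)).

(* Main.v *)
Require Import Defs.
From Stdlib Require Import Reals ZArith Lra Psatz.
From Coquelicot Require Import Coquelicot.
Open Scope R_scope.
From Stdlib Require Import Classical.
Open Scope R_scope.
Lemma D_eq (f : R -> R) (x l l' : R) : is_derive f x l -> l = l' -> is_derive f x l'.
Proof. intros H ->; exact H. Qed.

Lemma D_mul (f g : R -> R) x df dg : is_derive f x df -> is_derive g x dg ->
  is_derive (fun t => f t * g t) x (df * g x + f x * dg).
Proof. intros H1 H2. exact (is_derive_mult f g x df dg H1 H2 (fun n m => Rmult_comm n m)). Qed.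

Lemma D_add (f g : R -> R) x df dg : is_derive f x df -> is_derive g x dg ->
  is_derive (fun t => f t + g t) x (df + dg).
Proof. intros H1 H2. exact (is_derive_plus f g x df dg H1 H2). Qed.

Lemma D_sub (f g : R -> R) x df dg : is_derive f x df -> is_derive g x dg ->
  is_derive (fun t => f t - g t) x (df - dg).
Proof. intros H1 H2. exact (is_derive_minus f g x df dg H1 H2). Qed.

Lemma D_const (c x : R) : is_derive (fun _ => c) x 0.
Proof. exact (is_derive_const c x). Qed.

Lemma D_comp (f g : R -> R) x df dg : is_derive f (g x) df -> is_derive g x dg ->
  is_derive (fun t => f (g t)) x (dg * df).
Proof. intros H1 H2. exact (is_derive_comp f g x df dg H1 H2). Qed.

Lemma mvt (f df : R -> R) u v : u < v -> (forall t, u <= t <= v -> is_derive f t (df t)) ->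
  exists c, u < c < v /\ f v - f u = df c * (v - u).
Proof.
  intros H D. destruct (MVT_cor2 f df u v H) as [c [H1 H2]].
  intros; apply is_derive_Reals; auto. exists c; auto.
Qed.

Lemma cmp_strict (f df F dF : R -> R) u v : u < v ->
  (forall t, u <= t <= v -> is_derive f t (df t)) ->
  (forall t, u <= t <= v -> is_derive F t (dF t)) ->
  (forall t, u < t < v -> Rabs (df t) < dF t) ->
  Rabs (f v - f u) < F v - F u.
Proof.
  intros H D1 D2 B.
  destruct (mvt (fun t => F t - f t) (fun t => dF t - df t) u v H) as [c [Hc E]].
  intros; apply D_sub; auto.
  destruct (mvt (fun t => F t + f t) (fun t => dF t + df t) u v H) as [c' [Hc' E']].
  intros; apply D_add; auto.
  pose proof (B c Hc) as B1. pose proof (B c' Hc') as B2.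
  assert (P1: 0 < (dF c - df c) * (v - u)) by (apply Rmult_lt_0_compat; [revert B1; unfold Rabs; destruct Rcase_abs; lra | lra]).
  assert (P2: 0 < (dF c' + df c') * (v - u)) by (apply Rmult_lt_0_compat; [revert B2; unfold Rabs; destruct Rcase_abs; lra | lra]).
  unfold Rabs; destruct Rcase_abs; lra.
Qed.

Lemma C_mul (f g : R -> R) t : continuous f t -> continuous g t -> continuous (fun u => f u * g u) t.
Proof. intros; exact (continuous_mult f g t H H0). Qed.
Lemma C_sub (f g : R -> R) t : continuous f t -> continuous g t -> continuous (fun u => f u - g u) t.
Proof. intros; exact (continuous_minus f g t H H0). Qed.
Lemma C_add (f g : R -> R) t : continuous f t -> continuous g t -> continuous (fun u => f u + g u) t.
Proof. intros; exact (continuous_plus f g t H H0). Qed.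
Lemma C_pow2 (f : R -> R) t : continuous f t -> continuous (fun u => f u ^ 2) t.
Proof. intros. apply (continuous_ext (fun u => f u * f u) (fun u => f u ^ 2) t). intros; simpl; ring. apply C_mul; auto. Qed.
Lemma C_div (f g : R -> R) t : continuous f t -> continuous g t -> g t <> 0 -> continuous (fun u => f u / g u) t.
Proof. intros. apply (C_mul f (fun u => / g u)); auto. apply continuous_Rinv_comp; auto. Qed.

Definition clamp (a b t : R) := Rmax a (Rmin b t).
Lemma clamp_lip a b u v : Rabs (clamp a b u - clamp a b v) <= Rabs (u - v).
Proof. unfold clamp, Rmax, Rmin; repeat destruct Rle_dec; unfold Rabs; repeat destruct Rcase_abs; lra. Qed.
Lemma clamp_cont a b t : continuous (clamp a b) t.
Proof.
  apply continuity_pt_filterlim. unfold continuity_pt, continue_in, limit1_in, limit_in.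
  intros eps He. exists eps; split; auto. intros u [_ Hu]. simpl in *. unfold R_dist in *.
  eapply Rle_lt_trans; [apply clamp_lip|auto].
Qed.
Lemma clamp_in a b t : a <= b -> a <= clamp a b t <= b.
Proof. intros; unfold clamp, Rmax, Rmin; repeat destruct Rle_dec; lra. Qed.
Lemma clamp_id a b t : a <= t <= b -> clamp a b t = t.
Proof. intros; unfold clamp, Rmax, Rmin; repeat destruct Rle_dec; lra. Qed.

Definition cr3 (P Q R : pt) := (fst Q - fst P) * (snd R - snd Q) - (snd Q - snd P) * (fst R - fst Q).
Definition J P Q R := Rabs (cr3 P Q R).
Lemma J_132 P Q R : J P Q R = J P R Q.
Proof. unfold J. rewrite <- (Rabs_Ropp (cr3 P R Q)). f_equal. unfold cr3; ring. Qed.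
Lemma J_213 P Q R : J P Q R = J Q P R.
Proof. unfold J. rewrite <- (Rabs_Ropp (cr3 Q P R)). f_equal. unfold cr3; ring. Qed.
Lemma J_321 P Q R : J P Q R = J R Q P.
Proof. unfold J. rewrite <- (Rabs_Ropp (cr3 R Q P)). f_equal. unfold cr3; ring. Qed.
Lemma J_231 P Q R : J P Q R = J Q R P.
Proof. unfold J. f_equal. unfold cr3; ring. Qed.
Lemma J_312 P Q R : J P Q R = J R P Q.
Proof. unfold J. f_equal. unfold cr3; ring. Qed.

Section Main.
Variables (x y : R -> R) (a b R1 : R).
Hypothesis Hab : a < b.
Hypothesis Cx : C2 x.
Hypothesis Cy : C2 y.
Hypothesis Hsp : forall t, a <= t <= b -> (Derive x t, Derive y t) <> (0, 0).
Hypothesis Hk : forall t, a <= t <= b -> 0 < curvature x y t.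
Hypothesis HR1 : 0 < R1.
Hypothesis Hrho : forall t, a <= t <= b -> R1 <= / curvature x y t.
Hypothesis Htot : total_curvature x y a b <= PI.

Local Notation X1 := (Derive x).
Local Notation Y1 := (Derive y).
Local Notation X2 := (Derive (Derive x)).
Local Notation Y2 := (Derive (Derive y)).
Local Notation sp := (speed x y).

Lemma dX1 t : is_derive x t (X1 t).
Proof. apply Derive_correct. exact (proj1 (Cx t)). Qed.
Lemma dY1 t : is_derive y t (Y1 t).
Proof. apply Derive_correct. exact (proj1 (Cy t)). Qed.
Lemma dX2 t : is_derive X1 t (X2 t).
Proof. apply Derive_correct. exact (proj1 (proj2 (Cx t))). Qed.
Lemma dY2 t : is_derive Y1 t (Y2 t).
Proof. apply Derive_correct. exact (proj1 (proj2 (Cy t))). Qed.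
Lemma cX1 t : continuous X1 t.
Proof. exact (ex_derive_continuous _ _ (proj1 (proj2 (Cx t)))). Qed.
Lemma cY1 t : continuous Y1 t.
Proof. exact (ex_derive_continuous _ _ (proj1 (proj2 (Cy t)))). Qed.
Lemma cX2 t : continuous X2 t.
Proof. exact (proj2 (proj2 (Cx t))). Qed.
Lemma cY2 t : continuous Y2 t.
Proof. exact (proj2 (proj2 (Cy t))). Qed.

Definition s2 t := X1 t ^ 2 + Y1 t ^ 2.
Lemma s2_pos t : a <= t <= b -> 0 < s2 t.
Proof.
  intros Ht. unfold s2. destruct (Req_dec (X1 t) 0) as [E1|E1].
  - destruct (Req_dec (Y1 t) 0) as [E2|E2].
    + exfalso. apply (Hsp t Ht). rewrite E1, E2. reflexivity.
    + nra.
  - nra.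
Qed.
Lemma sp_sq t : sp t * sp t = s2 t.
Proof. unfold speed. apply sqrt_sqrt. unfold s2; nra. Qed.
Lemma sp_pos t : a <= t <= b -> 0 < sp t.
Proof. intros. unfold speed. apply sqrt_lt_R0. apply s2_pos; auto. Qed.
Lemma sp_nn t : 0 <= sp t.
Proof. unfold speed. apply sqrt_pos. Qed.

Definition num t := X1 t * Y2 t - Y1 t * X2 t.
Definition h t := num t / s2 t.

Lemma h_curv t : a <= t <= b -> curvature x y t * sp t = h t.
Proof.
  intros Ht. pose proof (sp_pos t Ht). unfold curvature, h, num. rewrite <- sp_sq.
  change (Derive_n y 2 t) with (Y2 t). change (Derive_n x 2 t) with (X2 t). field. lra.
Qed.
Lemma h_pos t : a <= t <= b -> 0 < h t.
Proof. intros Ht. rewrite <- h_curv; auto. apply Rmult_lt_0_compat; auto. apply sp_pos; auto. Qed.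
Lemma h_le t : a <= t <= b -> h t <= / R1 * sp t.
Proof.
  intros Ht. rewrite <- h_curv; auto. apply Rmult_le_compat_r. apply sp_nn.
  pose proof (Hk t Ht). pose proof (Hrho t Ht).
  rewrite <- (Rinv_inv (curvature x y t)). apply Rinv_le_contravar; auto.
Qed.
Lemma h_cont t : a <= t <= b -> continuous h t.
Proof.
  intros Ht. unfold h, num, s2. apply C_div.
  apply C_sub; apply C_mul; auto using cX1, cX2, cY1, cY2.
  apply C_add; apply C_pow2; auto using cX1, cY1.
  pose proof (s2_pos t Ht). unfold s2 in H. lra.
Qed.
Lemma sp_cont t : continuous sp t.
Proof.
  unfold speed. apply (continuous_comp (fun u => X1 u ^ 2 + Y1 u ^ 2) sqrt).
  apply C_add; apply C_pow2; auto using cX1, cY1.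
  apply continuity_pt_filterlim. apply continuity_pt_sqrt. nra.
Qed.

Definition g t := h (clamp a b t).
Lemma g_cont t : continuous g t.
Proof.
  unfold g. apply (continuous_comp (clamp a b) h). apply clamp_cont.
  apply h_cont. apply clamp_in; lra.
Qed.
Lemma g_h t : a <= t <= b -> g t = h t.
Proof. intros; unfold g; rewrite clamp_id; auto. Qed.

Definition th t := RInt g a t.
Definition S t := RInt sp a t.
Lemma d_th t : is_derive th t (g t).
Proof.
  apply (is_derive_RInt g th a t). apply filter_forall. intros u.
  unfold th. apply (RInt_correct g a u). apply ex_RInt_continuous. intros; apply g_cont.
  apply g_cont.
Qed.
Lemma d_S t : is_derive S t (sp t).
Proof.
  apply (is_derive_RInt sp S a t). apply filter_forall. intros u.
  unfold S. apply (RInt_correct sp a u). apply ex_RInt_continuous. intros; apply sp_cont.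
  apply sp_cont.
Qed.
Lemma th_a : th a = 0.
Proof. unfold th. rewrite RInt_point. reflexivity. Qed.
Lemma S_a : S a = 0.
Proof. unfold S. rewrite RInt_point. reflexivity. Qed.
Lemma th_b : th b = total_curvature x y a b.
Proof.
  unfold th, total_curvature. apply RInt_ext. intros t Ht.
  rewrite Rmin_left, Rmax_right in Ht; try lra.
  rewrite g_h, h_curv; auto; lra.
Qed.
Lemma S_b : S b = curve_length x y a b.
Proof. reflexivity. Qed.

Definition T0x := X1 a / sp a.
Definition T0y := Y1 a / sp a.
Lemma Ha : a <= a <= b.
Proof. lra. Qed.
Lemma T0_unit : T0x ^ 2 + T0y ^ 2 = 1.
Proof.
  unfold T0x, T0y. pose proof (sp_sq a) as E. unfold s2 in E. pose proof (sp_pos a Ha).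
  field_simplify; [|lra]. rewrite <- E. field. lra.
Qed.
Definition ex t := cos (th t) * T0x - sin (th t) * T0y.
Definition ey t := cos (th t) * T0y + sin (th t) * T0x.
Lemma d_cos t : is_derive (fun u => cos (th u)) t (g t * - sin (th t)).
Proof. apply (D_comp cos th t). apply is_derive_cos. apply d_th. Qed.
Lemma d_sin t : is_derive (fun u => sin (th u)) t (g t * cos (th t)).
Proof. apply (D_comp sin th t). apply is_derive_sin. apply d_th. Qed.
Lemma d_ex t : is_derive ex t (- g t * ey t).
Proof.
  unfold ex. eapply D_eq. apply D_sub; [apply D_mul; [apply d_cos|apply D_const] | apply D_mul; [apply d_sin|apply D_const]].
  unfold ey; ring.
Qed.
Lemma d_ey t : is_derive ey t (g t * ex t).
Proof.
  unfold ey. eapply D_eq. apply D_add; [apply D_mul; [apply d_cos|apply D_const] | apply D_mul; [apply d_sin|apply D_const]].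
  unfold ex; ring.
Qed.
Lemma e_unit t : ex t ^ 2 + ey t ^ 2 = 1.
Proof.
  transitivity ((sin (th t) ^ 2 + cos (th t) ^ 2) * (T0x ^ 2 + T0y ^ 2)).
  unfold ex, ey; ring. rewrite T0_unit. pose proof (sin2_cos2 (th t)). unfold Rsqr in H. simpl. lra.
Qed.
Lemma d_s2 t : is_derive s2 t (2 * (X1 t * X2 t + Y1 t * Y2 t)).
Proof.
  apply (is_derive_ext (fun u => X1 u * X1 u + Y1 u * Y1 u)). intros; unfold s2; simpl; ring.
  eapply D_eq. apply D_add; [apply D_mul; apply dX2 | apply D_mul; apply dY2]. ring.
Qed.
Lemma d_sp t : a <= t <= b -> is_derive sp t ((X1 t * X2 t + Y1 t * Y2 t) / sp t).
Proof.
  intros Ht. pose proof (sp_pos t Ht). unfold speed in *. eapply D_eq.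
  apply (is_derive_sqrt s2). apply d_s2. apply s2_pos; auto.
  unfold s2. field. lra.
Qed.
Definition Pf t := (X1 t * ex t + Y1 t * ey t) / sp t.
Definition Qf t := (Y1 t * ex t - X1 t * ey t) / sp t.
Lemma d_Pf t : a <= t <= b -> is_derive Pf t 0.
Proof.
  intros Ht. pose proof (sp_pos t Ht). unfold Pf. eapply D_eq. apply is_derive_div.
  apply D_add; [apply D_mul; [apply dX2|apply d_ex] | apply D_mul; [apply dY2|apply d_ey]].
  apply d_sp; auto. lra.
  rewrite g_h; auto. unfold h. rewrite <- sp_sq. pose proof (sp_sq t) as E. unfold s2 in E. unfold num.
  transitivity ((X2 t * ex t + Y2 t * ey t) * (sp t * sp t - (X1 t ^ 2 + Y1 t ^ 2)) / sp t ^ 3).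
  field. lra. rewrite E. field. lra.
Qed.
Lemma d_Qf t : a <= t <= b -> is_derive Qf t 0.
Proof.
  intros Ht. pose proof (sp_pos t Ht). unfold Qf. eapply D_eq. apply is_derive_div.
  apply D_sub; [apply D_mul; [apply dY2|apply d_ex] | apply D_mul; [apply dX2|apply d_ey]].
  apply d_sp; auto. lra.
  rewrite g_h; auto. unfold h. rewrite <- sp_sq. pose proof (sp_sq t) as E. unfold s2 in E. unfold num.
  transitivity ((Y2 t * ex t - X2 t * ey t) * (sp t * sp t - (X1 t ^ 2 + Y1 t ^ 2)) / sp t ^ 3).
  field. lra. rewrite E. field. lra.
Qed.
Lemma const_ab (f : R -> R) : (forall t, a <= t <= b -> is_derive f t 0) ->
  forall t, a <= t <= b -> f t = f a.
Proof.
  intros D t Ht. destruct (Req_dec t a) as [->|Hne]; auto.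
  destruct (mvt f (fun _ => 0) a t) as [c [_ E]]; [lra | intros; apply D; lra | lra].
Qed.
Lemma Pf_a : Pf a = 1.
Proof.
  unfold Pf, ex, ey. rewrite th_a, cos_0, sin_0. unfold T0x, T0y.
  pose proof (sp_sq a) as E. unfold s2 in E. pose proof (sp_pos a Ha).
  field_simplify; [|lra]. rewrite <- E. field. lra.
Qed.
Lemma Qf_a : Qf a = 0.
Proof.
  unfold Qf, ex, ey. rewrite th_a, cos_0, sin_0. unfold T0x, T0y.
  pose proof (sp_pos a Ha). field. lra.
Qed.
Lemma frame t : a <= t <= b -> X1 t = sp t * ex t /\ Y1 t = sp t * ey t.
Proof.
  intros Ht. pose proof (sp_pos t Ht).
  pose proof (const_ab Pf d_Pf t Ht) as P. rewrite Pf_a in P.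
  pose proof (const_ab Qf d_Qf t Ht) as Q. rewrite Qf_a in Q.
  assert (P' : X1 t * ex t + Y1 t * ey t = sp t).
  { transitivity (Pf t * sp t). unfold Pf; field; lra. rewrite P; ring. }
  assert (Q' : Y1 t * ex t - X1 t * ey t = 0).
  { transitivity (Qf t * sp t). unfold Qf; field; lra. rewrite Q; ring. }
  pose proof (e_unit t) as U. split.
  - transitivity (ex t * (X1 t * ex t + Y1 t * ey t) - ey t * (Y1 t * ex t - X1 t * ey t)).
    transitivity (X1 t * (ex t ^ 2 + ey t ^ 2)). rewrite U; ring. ring.
    rewrite P', Q'. ring.
  - transitivity (ey t * (X1 t * ex t + Y1 t * ey t) + ex t * (Y1 t * ex t - X1 t * ey t)).
    transitivity (Y1 t * (ex t ^ 2 + ey t ^ 2)). rewrite U; ring. ring.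
    rewrite P', Q'. ring.
Qed.
Lemma cross_id u v : a <= u <= b -> a <= v <= b ->
  X1 u * Y1 v - Y1 u * X1 v = sp u * sp v * sin (th v - th u).
Proof.
  intros Hu Hv. destruct (frame u Hu) as [E1 E2]. destruct (frame v Hv) as [E3 E4].
  rewrite E1, E2, E3, E4, sin_minus.
  transitivity (sp u * sp v * ((sin (th v) * cos (th u) - cos (th v) * sin (th u)) * (T0x ^ 2 + T0y ^ 2))).
  unfold ex, ey; ring. rewrite T0_unit; ring.
Qed.

Lemma e_cross u v : ex u * ey v - ey u * ex v = sin (th v - th u).
Proof.
  rewrite sin_minus.
  transitivity ((sin (th v) * cos (th u) - cos (th v) * sin (th u)) * (T0x ^ 2 + T0y ^ 2)).
  unfold ex, ey; ring. rewrite T0_unit; ring.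
Qed.
Lemma S_mono w v : w <= v -> S w <= S v.
Proof.
  intros H. destruct (Req_dec w v) as [->|Hn]; [lra|].
  destruct (mvt S sp w v) as [c [_ E]]; [lra| intros; apply d_S |].
  pose proof (sp_nn c). nra.
Qed.
Lemma th_incr w v : a <= w -> w < v -> v <= b -> th w < th v.
Proof.
  intros H1 H2 H3. destruct (mvt th g w v) as [c [Hc E]]; [lra| intros; apply d_th |].
  rewrite g_h in E by lra. pose proof (h_pos c ltac:(lra)). nra.
Qed.
Lemma th_S w v : a <= w -> w <= v -> v <= b -> th v - th w <= / R1 * (S v - S w).
Proof.
  intros H1 H2 H3. destruct (Req_dec w v) as [->|Hn]; [lra|].
  destruct (mvt (fun t => th t - / R1 * S t) (fun t => g t - / R1 * sp t) w v) as [c [Hc E]].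
  lra. intros t _. apply D_sub. apply d_th. apply (is_derive_scal S t (/ R1) (sp t) (d_S t)).
  rewrite g_h in E by lra. pose proof (h_le c ltac:(lra)).
  assert (0 <= v - w) by lra. nra.
Qed.
Lemma L1 w v : a <= w -> w < v -> v <= b -> Rabs (sin (th v - th w)) < / R1 * (S v - S w).
Proof.
  intros H1 H2 H3. pose proof (th_incr w v H1 H2 H3). pose proof (th_S w v H1 ltac:(lra) H3).
  assert (Hd : 0 < th v - th w) by lra.
  remember (th v - th w) as d.
  destruct (Rle_dec 0 (sin d)) as [Hs|Hs].
  - rewrite Rabs_right by lra. pose proof (sin_lt_x d ltac:(lra)). lra.
  - rewrite Rabs_left by lra. pose proof (SIN_bound d).
    assert (PI < d). { destruct (Rlt_le_dec PI d); auto. exfalso. apply Hs. apply sin_ge_0; lra. }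
    pose proof PI2_1. lra.
Qed.

Lemma L2 t1 t2 v : a <= t1 -> t1 < t2 -> t2 <= v -> v <= b ->
  Rabs ((x t2 - x t1) * Y1 v - (y t2 - y t1) * X1 v) <
  sp v * / R1 * ((S t2 - S t1) * ((S t2 - S t1) + 2 * (S v - S t2)) / 2).
Proof.
  intros H1 H2 H3 H4.
  set (K2 := sp v * / R1 / 2).
  pose proof (cmp_strict (fun w => (x t2 - x w) * Y1 v - (y t2 - y w) * X1 v)
    (fun w => - X1 w * Y1 v + Y1 w * X1 v)
    (fun w => K2 * ((S w - S t2) * ((S t2 - S w) + 2 * (S v - S t2))))
    (fun w => sp v * / R1 * sp w * (S v - S w)) t1 t2 H2) as C.
  cbv beta in C.
  assert (E1 : (x t2 - x t2) * Y1 v - (y t2 - y t2) * X1 v -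
     ((x t2 - x t1) * Y1 v - (y t2 - y t1) * X1 v) = - ((x t2 - x t1) * Y1 v - (y t2 - y t1) * X1 v)) by ring.
  assert (E2 : K2 * ((S t2 - S t2) * (S t2 - S t2 + 2 * (S v - S t2))) -
     K2 * ((S t1 - S t2) * (S t2 - S t1 + 2 * (S v - S t2))) =
     sp v * / R1 * ((S t2 - S t1) * ((S t2 - S t1) + 2 * (S v - S t2)) / 2)) by (unfold K2; field; lra).
  rewrite E1, E2, Rabs_Ropp in C. apply C.
  - intros w _. eapply D_eq.
    apply D_sub; [apply D_mul; [apply D_sub; [apply D_const|apply dX1]|apply D_const]
                 |apply D_mul; [apply D_sub; [apply D_const|apply dY1]|apply D_const]].
    cbv beta; ring.
  - intros w _. eapply D_eq.
    apply D_mul; [apply D_const|].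
    apply D_mul; [apply D_sub; [apply d_S|apply D_const]|].
    apply D_add; [apply D_sub; [apply D_const|apply d_S]|apply D_const].
    cbv beta; unfold K2; field; lra.
  - intros w Hw.
    replace (- X1 w * Y1 v + Y1 w * X1 v) with (- (X1 w * Y1 v - Y1 w * X1 v)) by ring.
    rewrite Rabs_Ropp, cross_id by lra.
    pose proof (sp_pos w ltac:(lra)). pose proof (sp_pos v ltac:(lra)).
    rewrite Rabs_mult, Rabs_right by nra.
    pose proof (L1 w v ltac:(lra) ltac:(lra) H4).
    replace (sp v * / R1 * sp w * (S v - S w)) with (sp w * sp v * (/ R1 * (S v - S w))) by ring.
    apply Rmult_lt_compat_l; nra.
Qed.

Lemma L3 t1 t2 t3 : a <= t1 -> t1 < t2 -> t2 < t3 -> t3 <= b ->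
  Rabs ((x t2 - x t1) * (y t3 - y t2) - (y t2 - y t1) * (x t3 - x t2)) <
  / R1 * ((S t2 - S t1) * (S t3 - S t2) * ((S t2 - S t1) + (S t3 - S t2)) / 2).
Proof.
  intros H1 H2 H3 H4.
  set (A := S t2 - S t1). set (K3 := / R1 * A / 2).
  pose proof (cmp_strict (fun v => (x t2 - x t1) * (y v - y t2) - (y t2 - y t1) * (x v - x t2))
    (fun v => (x t2 - x t1) * Y1 v - (y t2 - y t1) * X1 v)
    (fun v => K3 * ((S v - S t2) * (A + (S v - S t2))))
    (fun v => sp v * / R1 * (A * (A + 2 * (S v - S t2)) / 2)) t2 t3 H3) as C.
  cbv beta in C.
  assert (E1 : (x t2 - x t1) * (y t3 - y t2) - (y t2 - y t1) * (x t3 - x t2) -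
    ((x t2 - x t1) * (y t2 - y t2) - (y t2 - y t1) * (x t2 - x t2)) =
    (x t2 - x t1) * (y t3 - y t2) - (y t2 - y t1) * (x t3 - x t2)) by ring.
  assert (E2 : K3 * ((S t3 - S t2) * (A + (S t3 - S t2))) - K3 * ((S t2 - S t2) * (A + (S t2 - S t2))) =
    / R1 * (A * (S t3 - S t2) * (A + (S t3 - S t2)) / 2)) by (unfold K3; field; lra).
  rewrite E1, E2 in C. apply C.
  - intros v _. eapply D_eq.
    apply D_sub; [apply D_mul; [apply D_const|apply D_sub; [apply dY1|apply D_const]]
                 |apply D_mul; [apply D_const|apply D_sub; [apply dX1|apply D_const]]].
    cbv beta; ring.
  - intros v _. eapply D_eq.
    apply D_mul; [apply D_const|].
    apply D_mul; [apply D_sub; [apply d_S|apply D_const]|].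
    apply D_add; [apply D_const|apply D_sub; [apply d_S|apply D_const]].
    cbv beta; unfold K3; field; lra.
  - intros v Hv. unfold A. apply L2; lra.
Qed.

Lemma noncol t1 t2 t3 : a <= t1 -> t1 < t2 -> t2 < t3 -> t3 <= b ->
  (x t1, y t1) <> (x t2, y t2) ->
  (x t2 - x t1) * (y t3 - y t2) - (y t2 - y t1) * (x t3 - x t2) <> 0.
Proof.
  intros H1 H2 H3 H4 Hne HG.
  set (Dx := x t2 - x t1) in *. set (Dy := y t2 - y t1) in *.
  assert (HD : Dx <> 0 \/ Dy <> 0).
  { destruct (Req_dec Dx 0); destruct (Req_dec Dy 0); auto. exfalso; apply Hne.
    unfold Dx, Dy in *. f_equal; lra. }
  assert (Df : forall t, is_derive (fun t => (x t - x t1) * Dy - (y t - y t1) * Dx) t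
                 (X1 t * Dy - Y1 t * Dx)).
  { intros t. eapply D_eq.
    apply D_sub; [apply D_mul; [apply D_sub; [apply dX1|apply D_const]|apply D_const]
                 |apply D_mul; [apply D_sub; [apply dY1|apply D_const]|apply D_const]].
    cbv beta; ring. }
  destruct (mvt _ _ t1 t2 H2 (fun t _ => Df t)) as [c1 [Hc1 E1]].
  destruct (mvt _ _ t2 t3 H3 (fun t _ => Df t)) as [c2 [Hc2 E2]].
  cbv beta in E1, E2.
  assert (Z1 : X1 c1 * Dy - Y1 c1 * Dx = 0).
  { assert ((X1 c1 * Dy - Y1 c1 * Dx) * (t2 - t1) = 0) by (rewrite <- E1; unfold Dx, Dy; ring).
    apply Rmult_integral in H. destruct H; auto. lra. }
  assert (Z2 : X1 c2 * Dy - Y1 c2 * Dx = 0).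
  { assert ((X1 c2 * Dy - Y1 c2 * Dx) * (t3 - t2) = 0).
    { rewrite <- E2. transitivity (- (Dx * (y t3 - y t2) - Dy * (x t3 - x t2))). unfold Dx, Dy; ring. rewrite HG; ring. }
    apply Rmult_integral in H. destruct H; auto. lra. }
  destruct (frame c1 ltac:(lra)) as [F1 F2]. destruct (frame c2 ltac:(lra)) as [F3 F4].
  pose proof (sp_pos c1 ltac:(lra)). pose proof (sp_pos c2 ltac:(lra)).
  rewrite F1, F2 in Z1. rewrite F3, F4 in Z2.
  assert (W1 : ex c1 * Dy - ey c1 * Dx = 0).
  { assert (sp c1 * (ex c1 * Dy - ey c1 * Dx) = 0) by (rewrite <- Z1; ring).
    apply Rmult_integral in H5. destruct H5; auto. lra. }
  assert (W2 : ex c2 * Dy - ey c2 * Dx = 0).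
  { assert (sp c2 * (ex c2 * Dy - ey c2 * Dx) = 0) by (rewrite <- Z2; ring).
    apply Rmult_integral in H5. destruct H5; auto. lra. }
  assert (EX : (ex c1 * ey c2 - ey c1 * ex c2) * Dx = 0).
  { transitivity (ex c2 * (ex c1 * Dy - ey c1 * Dx) - ex c1 * (ex c2 * Dy - ey c2 * Dx)).
    ring. rewrite W1, W2; ring. }
  assert (EY : (ex c1 * ey c2 - ey c1 * ex c2) * Dy = 0).
  { transitivity (ey c2 * (ex c1 * Dy - ey c1 * Dx) - ey c1 * (ex c2 * Dy - ey c2 * Dx)).
    ring. rewrite W1, W2; ring. }
  rewrite e_cross in EX, EY.
  assert (Hs : sin (th c2 - th c1) = 0).
  { destruct HD as [HD|HD]; [apply Rmult_integral in EX | apply Rmult_integral in EY];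
    intuition. }
  pose proof (th_incr a c1 ltac:(lra) ltac:(lra) ltac:(lra)).
  pose proof (th_incr c1 c2 ltac:(lra) ltac:(lra) ltac:(lra)).
  pose proof (th_incr c2 b ltac:(lra) ltac:(lra) ltac:(lra)).
  rewrite th_a in *. rewrite th_b in *.
  pose proof (sin_gt_0 (th c2 - th c1) ltac:(lra) ltac:(lra)). lra.
Qed.

Lemma sorted t1 t2 t3 : a <= t1 -> t1 < t2 -> t2 < t3 -> t3 <= b ->
  (x t1, y t1) <> (x t2, y t2) ->
  0 < Rabs ((x t2 - x t1) * (y t3 - y t2) - (y t2 - y t1) * (x t3 - x t2)) /\
  Rabs ((x t2 - x t1) * (y t3 - y t2) - (y t2 - y t1) * (x t3 - x t2)) < / R1 * (S b ^ 3 / 8).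
Proof.
  intros H1 H2 H3 H4 Hne. split.
  - apply Rabs_pos_lt. apply noncol; auto.
  - eapply Rlt_le_trans. apply L3; auto.
    pose proof (S_mono t1 t2 ltac:(lra)). pose proof (S_mono t2 t3 ltac:(lra)).
    pose proof (S_mono a t1 H1). pose proof (S_mono t3 b H4). rewrite S_a in *.
    apply Rmult_le_compat_l. left; apply Rinv_0_lt_compat; auto.
    set (A := S t2 - S t1). set (B := S t3 - S t2).
    assert (A * B * (A + B) / 2 <= (A + B) ^ 3 / 8).
    { assert (0 <= (A + B) * (A - B) ^ 2) by (apply Rmult_le_pos; [unfold A, B; lra| apply pow2_ge_0]).
      nra. }
    assert ((A + B) ^ 3 <= S b ^ 3). { apply pow_incr. unfold A, B; lra. }
    lra.
Qed.

Lemma core s1 s2 s3 : a <= s1 <= b -> a <= s2 <= b -> a <= s3 <= b ->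
  (x s1, y s1) <> (x s2, y s2) -> (x s1, y s1) <> (x s3, y s3) -> (x s2, y s2) <> (x s3, y s3) ->
  0 < J (x s1, y s1) (x s2, y s2) (x s3, y s3) /\
  J (x s1, y s1) (x s2, y s2) (x s3, y s3) < / R1 * (S b ^ 3 / 8).
Proof.
  intros H1 H2 H3 N12 N13 N23.
  assert (s1 <> s2) by (intro E; subst; auto).
  assert (s1 <> s3) by (intro E; subst; auto).
  assert (s2 <> s3) by (intro E; subst; auto).
  assert (SR : forall u v w, a <= u -> u < v -> v < w -> w <= b -> (x u, y u) <> (x v, y v) ->
     0 < J (x u, y u) (x v, y v) (x w, y w) /\ J (x u, y u) (x v, y v) (x w, y w) < / R1 * (S b ^ 3 / 8)).
  { intros. unfold J, cr3; simpl. apply sorted; auto. }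
  destruct (Rlt_or_le s1 s2); destruct (Rlt_or_le s2 s3); destruct (Rlt_or_le s1 s3).
  - apply SR; auto; lra.
  - lra.
  - rewrite J_132. apply SR; auto; lra.
  - rewrite J_312. apply SR; auto; lra.
  - rewrite J_213. apply SR; auto; lra.
  - rewrite J_231. apply SR; auto; lra.
  - lra.
  - rewrite J_321. apply SR; auto; lra.
Qed.

End Main.


Theorem theorem6p1 (x y : R -> R) (a b R1 : R) (v0 v1 v2 : pt) :
  a < b ->
  C2 x -> C2 y ->
  (forall t, a <= t <= b -> (Derive x t, Derive y t) <> (0, 0)) ->
  (forall t, a <= t <= b -> (Derive_n x 2 t, Derive_n y 2 t) <> (0, 0)) ->
  (forall t, a <= t <= b -> 0 < curvature x y t) ->
  on_convex_boundary x y a b ->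
  0 < R1 ->
  (forall t, a <= t <= b -> R1 <= / curvature x y t) ->
  total_curvature x y a b <= PI ->
  det2 v1 v2 <> 0 ->
  curve_length x y a b / Rpower (lattice_invariant v1 v2 * R1) (1 / 3) <= 2 ->
  forall p1 p2 p3 : pt,
    in_lattice v0 v1 v2 p1 -> in_lattice v0 v1 v2 p2 -> in_lattice v0 v1 v2 p3 ->
    (exists t, a <= t <= b /\ p1 = (x t, y t)) ->
    (exists t, a <= t <= b /\ p2 = (x t, y t)) ->
    (exists t, a <= t <= b /\ p3 = (x t, y t)) ->
    p1 = p2 \/ p1 = p3 \/ p2 = p3.
Proof.
  intros Hab Cx Cy Hsp _ Hk _ HR1 Hrho Htot Hdet Hlen p1 p2 p3 L1 L2 L3
    [s1 [Hs1 E1]] [s2 [Hs2 E2]] [s3 [Hs3 E3]].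
  destruct (classic (p1 = p2 \/ p1 = p3 \/ p2 = p3)) as [H|H]; auto. exfalso.
  assert (N12 : p1 <> p2) by tauto. assert (N13 : p1 <> p3) by tauto. assert (N23 : p2 <> p3) by tauto.
  subst p1 p2 p3.
  destruct (core x y a b R1 Hab Cx Cy Hsp Hk HR1 Hrho Htot s1 s2 s3 Hs1 Hs2 Hs3 N12 N13 N23) as [P Q].
  set (A := lattice_invariant v1 v2) in *.
  assert (HA : 0 < A) by (unfold A, lattice_invariant; apply Rabs_pos_lt; auto).
  assert (LB : A <= J (x s1, y s1) (x s2, y s2) (x s3, y s3)).
  { destruct L1 as [m1 [n1 [F1 G1]]]. destruct L2 as [m2 [n2 [F2 G2]]]. destruct L3 as [m3 [n3 [F3 G3]]].
    set (z := ((m2 - m1) * (n3 - n2) - (n2 - n1) * (m3 - m2))%Z).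
    assert (EQ : cr3 (x s1, y s1) (x s2, y s2) (x s3, y s3) = IZR z * det2 v1 v2).
    { unfold cr3. rewrite F1, G1, F2, G2, F3, G3. unfold z, det2.
      rewrite !minus_IZR, !mult_IZR, !minus_IZR. ring. }
    unfold J in *. rewrite EQ in *. rewrite Rabs_mult in *. fold (lattice_invariant v1 v2). fold A.
    assert (z <> 0%Z). { intro Z0. rewrite Z0 in P. rewrite Rabs_R0 in P. lra. }
    assert (1 <= Rabs (IZR z)).
    { rewrite <- abs_IZR. apply IZR_le. lia. }
    nra. }
  set (c := Rpower (A * R1) (1 / 3)) in *.
  assert (Hc : 0 < c) by (unfold c, Rpower; apply exp_pos).
  assert (Hc3 : c ^ 3 = A * R1).
  { rewrite <- Rpower_pow by auto. unfold c. rewrite Rpower_mult.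
    replace (1 / 3 * INR 3) with 1 by (simpl; field). apply Rpower_1. nra. }
  rewrite S_b in Q.
  set (L := curve_length x y a b) in *.
  assert (HL0 : 0 <= L).
  { unfold L. rewrite <- S_b. rewrite <- (S_a x y a). apply S_mono; auto; lra. }
  assert (HL : L <= 2 * c).
  { replace L with (L / c * c) by (field; lra). nra. }
  assert (L ^ 3 <= (2 * c) ^ 3) by (apply pow_incr; lra).
  assert (/ R1 * (L ^ 3 / 8) <= A).
  { replace A with (/ R1 * ((2 * c) ^ 3 / 8)).
    apply Rmult_le_compat_l. left; apply Rinv_0_lt_compat; auto. lra.
    replace ((2 * c) ^ 3) with (8 * c ^ 3) by ring. rewrite Hc3. field. lra. }
  lra.
Qed.
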